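(* Let $X,Y$ be Banach spaces over $\mathbb{K}\in\{\mathbb{R},\mathbb{C}\}$ and let $G\in L(X,Y)$ with $\|G\|=1$. If $n_G^{(2)}(X,Y)=1$, then $n_G^{(1)}(X,Y)= n_G(X,Y)$.
   Context: For $T\in L(X,Y)$: $\|T\|_G := \inf_{\delta>0}\sup\{\|Tx\|: x\in S_X,\ \|Gx\|>1-\delta\}$ ($S_X$ the unit sphere); $V_G(T):=\bigcap_{\delta>0}\overline{\{y^*(Tx): x\in S_X,\ y^*\in S_{Y^*},\ \operatorname{Re} y^*(Gx)>1-\delta\}}$, $\nu_G(T):=\max\{|\lambda|:\lambda\in V_G(T)\}$. The numerical indices are $n_G(X,Y):=\inf\{\nu_G(T):\|T\|=1\}=\max\{k\ge0: k\|T\|\le\nu_G(T)\ \forall T\}$, $n_G^{(1)}(X,Y):=\inf\{\|T\|_G:\|T\|=1\}=\max\{k\ge0: k\|T\|\le\|T\|_G\ \forall T\}$, $n_G^{(2)}(X,Y):=\inf\{\nu_G(T):\|T\|_G=1\}=\max\{k\ge0: k\|T\|_G\le\nu_G(T)\ \forall T\}$, all over $T\in L(X,Y)$. Standing assumption of the paper: $\|\cdot\|_G$ is a norm on $L(X,Y)$. *)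

(* Defs.v *)
From HB Require Import structures.
From mathcomp Require Import all_boot all_order all_algebra.
From mathcomp Require Import all_classical all_reals all_analysis.
From mathcomp Require Import complex.
Set Implicit Arguments. Unset Strict Implicit. Unset Printing Implicit Defensive.
Import Order.TTheory GRing.Theory Num.Theory.
Import numFieldNormedType.Exports.
Local Open Scope classical_set_scope.
Local Open Scope ring_scope.

(* Generic setting: scalar field K (K = R or K = R[i]), with a real part map
   re : K -> R (re = id in the real case, complex.Re in the complex case).
   All norms are real numbers in R obtained as  re `|.|  (the norm of a
   numFieldType / normedModType K is K-valued but real). *)
Section GNumIndex.
Variables (R : realType) (K : numFieldType) (re : K -> R).

Definition rnorm (V : normedModType K) (v : V) : R := re `|v|.
Definition rabs (z : K) : R := re `|z|.

Variables (X Y : normedModType K).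

Definition opnorm (T : X -> Y) : R :=
  sup [set rnorm (T x) | x in [set x : X | rnorm x <= 1]].

Definition fnorm (f : Y -> K) : R :=
  sup [set rabs (f y) | y in [set y : Y | rnorm y <= 1]].

Definition bdd_lin (T : {linear X -> Y}) : Prop := continuous T.

Definition dual_sphere (f : {linear Y -> K^o}) : Prop :=
  continuous (f : Y -> K) /\ fnorm f = 1.

Definition sphereX : set X := [set x | rnorm x = 1].

Definition Gnorm (G T : X -> Y) : R :=
  inf [set sup [set rnorm (T x) | x in [set x | sphereX x /\ 1 - d < rnorm (G x)]]
      | d in [set d : R | 0 < d]].

Definition VG (G T : X -> Y) : set K :=
  \bigcap_(d in [set d : R | 0 < d])
    closure [set z : K | exists (x : X) (f : {linear Y -> K^o}),
               [/\ sphereX x, dual_sphere f, 1 - d < re (f (G x)) & z = f (T x)]].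

(* nu_G(T) := max { |lambda| : lambda in V_G(T) }  (the max is attained; we use sup) *)
Definition nuG (G T : X -> Y) : R := sup [set rabs l | l in VG G T].

Definition nG (G : X -> Y) : R :=
  inf [set nuG G T | T in [set T : {linear X -> Y} | bdd_lin T /\ opnorm T = 1]].

Definition nG1 (G : X -> Y) : R :=
  inf [set Gnorm G T | T in [set T : {linear X -> Y} | bdd_lin T /\ opnorm T = 1]].

Definition nG2 (G : X -> Y) : R :=
  inf [set nuG G T | T in [set T : {linear X -> Y} | bdd_lin T /\ Gnorm G T = 1]].

(* Standing assumption of the paper: ||.||_G is a norm on L(X,Y). *)
Definition Gnorm_is_norm (G : X -> Y) : Prop :=
  [/\ (forall S T : {linear X -> Y}, bdd_lin S -> bdd_lin T ->
         Gnorm G (fun x => S x + T x) <= Gnorm G S + Gnorm G T),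
      (forall (a : K) (T : {linear X -> Y}), bdd_lin T ->
         Gnorm G (fun x => a *: T x) = rabs a * Gnorm G T) &
      (forall T : {linear X -> Y}, bdd_lin T -> Gnorm G T = 0 -> forall x, T x = 0)].

End GNumIndex.

(* Main.v *)
Require Import Defs.
From HB Require Import structures.
From mathcomp Require Import all_boot all_order all_algebra.
From mathcomp Require Import all_classical all_reals all_analysis.
From mathcomp Require Import complex.
Import Order.TTheory GRing.Theory Num.Theory.
Import numFieldNormedType.Exports.
Local Open Scope classical_set_scope.
Local Open Scope ring_scope.

Section Gen.
Variables (R : realType) (K : numFieldType) (re : K -> R).
Hypothesis Hle : forall k l : K, 0 <= k -> 0 <= l -> (re k <= re l) = (k <= l).
Hypothesis Hmul : forall k l : K, 0 <= k -> 0 <= l -> re (k * l) = re k * re l.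
Hypothesis H1 : re 1 = 1.
Hypothesis H0 : re 0 = 0.
Hypothesis Hsurj : forall r : R, 0 <= r -> exists2 k : K, 0 <= k & re k = r.
Hypothesis Hre : forall z : K, re z <= re `|z|.

Lemma re_ge0 k : 0 <= k -> 0 <= re k.
Proof. by move=> k0; rewrite -H0 Hle. Qed.

Lemma re_lt k l : 0 <= k -> 0 <= l -> (re k < re l) = (k < l).
Proof.
move=> k0 l0; rewrite ltNge Hle // real_ltNge //; exact: ger0_real.
Qed.

Lemma sup_ge0 (E : set R) : (forall x, E x -> 0 <= x) -> 0 <= sup E.
Proof.
move=> E0; case: (pselect (has_sup E)) => [[[e Ee] ub]|nh]; last by rewrite sup_out.
exact: le_trans (E0 _ Ee) (ub_le_sup ub Ee).
Qed.

Variables (X Y : normedModType K).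

Lemma rnorm_ge0 (V : normedModType K) (v : V) : 0 <= rnorm re v.
Proof. exact: re_ge0. Qed.
Lemma rabs_ge0 (z : K) : 0 <= rabs re z.
Proof. exact: re_ge0. Qed.

Lemma rnorm_le1 (V : normedModType K) (v : V) : rnorm re v <= 1 -> `|v| <= 1.
Proof. by rewrite /rnorm -H1 Hle. Qed.

Lemma rnorm_eq1 (V : normedModType K) (v : V) : rnorm re v = 1 -> `|v| = 1.
Proof.
rewrite /rnorm -H1 => e; apply/eqP; rewrite eq_le; apply/andP; split; rewrite -Hle ?e // ?ler01 // ?lexx.
Qed.

Lemma lin_bound (V W : normedModType K) (T : {linear V -> W}) : continuous T ->
  exists2 M : K, 0 <= M & forall x, `|x| <= 1 -> `|T x| <= M.
Proof.
move=> /linear_bounded_continuous /bounded_funP /(_ 1) [M HM].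
exists M => //; apply: le_trans (HM 0 _); rewrite ?linear0 ?normr0 //.
Qed.

Lemma fbound (f : {linear Y -> K^o}) : dual_sphere re f -> forall y, `|f y| <= `|y|.
Proof.
move=> [cf f1] y.
have [M M0 HM] := @lin_bound _ _ f cf.
have ub : has_ubound [set rabs re (f y) | y in [set y | rnorm re y <= 1]].
  by exists (re M) => _ [z /rnorm_le1 z1 <-]; rewrite /rabs Hle // HM.
have key : forall z, rnorm re z <= 1 -> `|f z| <= 1.
  move=> z z1; rewrite -(Hle _ _ (normr_ge0 _) ler01) H1 -f1.
  by apply: (ub_le_sup ub); exists z.
have [->|y0] := eqVneq y 0; first by rewrite linear0 !normr0.
set t := `|y|; have t0 : 0 < t by rewrite normr_gt0.
have h : `|f (t^-1 *: y)| <= 1.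
  apply: key; rewrite /rnorm normrZ -/t ger0_norm ?invr_ge0 ?(ltW t0) //.
  by rewrite mulVf ?gt_eqF // H1.
move: h; rewrite linearZ /= normrM ger0_norm ?invr_ge0 ?(ltW t0) // => h.
have -> : `|f y| = t * (t^-1 * `|f y|) by rewrite mulrA mulfV ?gt_eqF // mul1r.
by apply: ler_piMr => //; apply: ltW.
Qed.

Lemma closure_normle (A : set K) (k l : K) : 0 <= k ->
  (forall z, A z -> `|z| <= k) -> closure A l -> `|l| <= k.
Proof.
move=> k0 Ak cl; rewrite real_leNgt ?ger0_real //; apply/negP => lk.
have e0 : 0 < `|l| - k by rewrite subr_gt0.
have [z [Az bz]] := cl _ (nbhsx_ballx l _ e0).
move: bz; rewrite -ball_normE /ball_ /= => lz.
have zk := Ak _ Az.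
have : `|l| < `|l|.
  rewrite -{1}(subrK z l) addrC.
  apply: le_lt_trans (ler_normD _ _) _.
  rewrite -[X in _ < X](subrK k) addrC.
  exact: ltr_leD lz zk.
by rewrite ltxx.
Qed.


Lemma VG_bound (G : X -> Y) (T : {linear X -> Y}) : continuous T ->
  forall l, VG re G T l -> forall d, 0 < d ->
  rabs re l <= sup [set rnorm re (T x) | x in [set x | sphereX re x /\ 1 - d < rnorm re (G x)]].
Proof.
move=> cT l Vl d d0.
have cl := Vl d d0.
set B := [set rnorm re (T x) | x in _].
have [M M0 HM] := @lin_bound _ _ T cT.
have ubB : has_ubound B.
  by exists (re M) => _ [x [/rnorm_eq1 x1 _] <-]; rewrite /rnorm Hle // HM // x1.
have sB : 0 <= sup B by apply: sup_ge0 => _ [x _ <-]; exact: rnorm_ge0.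
have [k k0 ks] := Hsurj _ sB.
rewrite -ks /rabs Hle //; apply: (@closure_normle _ _ _ k0 _ cl) => z [x [f [Sx fs Gx ->]]].
rewrite -(Hle _ _ (normr_ge0 _) k0) ks.
have Bx : B (rnorm re (T x)).
  exists x => //; split => //; apply: lt_le_trans Gx _.
  by apply: le_trans (Hre _) _; rewrite Hle //; exact: fbound.
apply: le_trans (ub_le_sup ubB Bx).
by rewrite /rnorm Hle //; exact: fbound.
Qed.

Lemma Gnorm_ge0 (G T : X -> Y) : 0 <= Gnorm re G T.
Proof.
apply: lb_le_inf.
  by eexists; exists 1; [exact: ltr01 | reflexivity].
by move=> _ [d d0 <-]; apply: sup_ge0 => _ [x _ <-]; exact: rnorm_ge0.
Qed.

Lemma VG_le (G : X -> Y) (T : {linear X -> Y}) : continuous T ->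
  forall l, VG re G T l -> rabs re l <= Gnorm re G T.
Proof.
move=> cT l Vl; apply: lb_le_inf.
  by eexists; exists 1; [exact: ltr01 | reflexivity].
by move=> _ [d d0 <-]; exact: VG_bound.
Qed.

Lemma nuG_le (G : X -> Y) (T : {linear X -> Y}) : continuous T ->
  nuG re G T <= Gnorm re G T.
Proof.
move=> cT; rewrite /nuG.
have [->|ne] := eqVneq [set rabs re l | l in VG re G T] set0.
  by rewrite sup0 Gnorm_ge0.
apply: ge_sup; first by apply/set0P.
by move=> _ [l Vl <-]; exact: VG_le.
Qed.

Lemma nuG_ge0 (G T : X -> Y) : 0 <= nuG re G T.
Proof. by apply: sup_ge0 => _ [l _ <-]; exact: rabs_ge0. Qed.

Lemma VG_scale (G : X -> Y) (T : {linear X -> Y}) (a : K) : a != 0 ->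
  forall l, VG re G (a \*: T) l -> VG re G T (a^-1 * l).
Proof.
move=> a0 l Vl d d0 B nB.
have cl := Vl d d0.
have nB' := @mulrl_continuous K a^-1 l B nB.
have [z [[x [f [Sx fs Gx ->]]] Bz]] := cl _ nB'.
exists (f (T x)); split; first by exists x, f.
by move: Bz => /=; rewrite linearZ /= mulKf.
Qed.


Lemma Gnorm_nuG (G : {linear X -> Y}) : Gnorm_is_norm re G -> nG2 re G = 1 ->
  forall T : {linear X -> Y}, continuous T -> Gnorm re G T = nuG re G T.
Proof.
move=> Hn H2 T cT; apply/eqP; rewrite eq_le (@nuG_le _ _ cT) andbT.
have [c0|cn0] := eqVneq (Gnorm re G T) 0; first by rewrite c0 nuG_ge0.
have cpos : 0 < Gnorm re G T by rewrite lt_neqAle eq_sym cn0 Gnorm_ge0.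
set c := Gnorm re G T in cpos *.
have cinv : 0 < c^-1 by rewrite invr_gt0.
have [a a0 ra] := Hsurj _ (ltW cinv).
have an0 : a != 0.
  apply/eqP => a0'; move: ra; rewrite a0' H0 => /esym/eqP.
  by rewrite invr_eq0 gt_eqF.
pose T' : {linear X -> Y} := a \*: T.
have cT' : continuous T' := fun x => continuousZl_tmp (k:=a) (cT x).
have GT' : Gnorm re G T' = 1.
  case: Hn => _ Hh _; have := Hh a T cT; rewrite /rabs ger0_norm // ra mulVf ?gt_eqF //.
have nuT' : 1 <= nuG re G T'.
  rewrite -H2 /nG2; apply: ge_inf.
    by exists 0 => _ [S _ <-]; exact: nuG_ge0.
  by exists T'.
have neT : [set rabs re l | l in VG re G T'] !=set0.
  by apply/set0P/eqP => e; move: nuT'; rewrite /nuG e sup0 ler10.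
have ubT : has_ubound [set rabs re l | l in VG re G T].
  by exists c => _ [l Vl <-]; exact: VG_le.
have reai : re a^-1 = c.
  have h : re a * re a^-1 = 1 by rewrite -Hmul ?invr_ge0 // mulfV // H1.
  by move: h; rewrite ra => h; rewrite -(mulKf (negbT (gt_eqF cinv)) (re a^-1)) h invrK mulr1.
have : nuG re G T' <= nuG re G T / c.
  apply: ge_sup neT _ => _ [l Vl <-].
  rewrite ler_pdivlMr //.
  have Vl' := @VG_scale _ _ _ an0 _ Vl.
  have := ub_le_sup ubT (ex_intro2 _ _ _ Vl' erefl).
  by rewrite /rabs normrM ger0_norm ?invr_ge0 // Hmul ?invr_ge0 // reai mulrC.
move=> h; have := le_trans nuT' h; by rewrite ler_pdivlMr // mul1r.
Qed.

Lemma gen_main (G : {linear X -> Y}) : Gnorm_is_norm re G -> nG2 re G = 1 ->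
  nG1 re G = nG re G.
Proof.
move=> Hn H2; rewrite /nG1 /nG; congr inf; apply: eq_imagel => T [cT _].
exact: Gnorm_nuG.
Qed.

End Gen.

Theorem proposition3p5 (R : realType) :
  (forall (X Y : completeNormedModType R) (G : {linear X -> Y}),
     continuous G -> opnorm (fun r : R => r) G = 1 ->
     Gnorm_is_norm (fun r : R => r) G ->
     nG2 (fun r : R => r) G = 1 ->
     nG1 (fun r : R => r) G = nG (fun r : R => r) G)
  /\
  (forall (X Y : completeNormedModType R[i]) (G : {linear X -> Y}),
     continuous G -> opnorm (@complex.Re R) G = 1 ->
     Gnorm_is_norm (@complex.Re R) G ->
     nG2 (@complex.Re R) G = 1 ->
     nG1 (@complex.Re R) G = nG (@complex.Re R) G).
Proof.
split.
  move=> X Y G _ _ Hn H2.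
  apply: (@gen_main R R (fun r => r) _ _ _ _ _ _ X Y G Hn H2) => //.
  - by move=> r r0; exists r.
  - by move=> z; exact: ler_norm.
move=> X Y G _ _ Hn H2.
apply: (@gen_main R R[i] (@complex.Re R) _ _ _ _ _ _ X Y G Hn H2) => //.
- move=> k l k0 l0; rewrite lecE (ger0_Im k0) (ger0_Im l0) eqxx //.
- move=> [a b] [c d] k0 l0; move: (ger0_Im k0) (ger0_Im l0) => /= -> ->.
  by rewrite /= !mulr0 subr0.
- by move=> r r0; exists (r%:C)%C; rewrite ?ler0c.
- move=> [a b]; rewrite normc_def /=.
  apply: le_trans (ler_norm a) _; rewrite -sqrtr_sqr ler_sqrt ?lerDl ?sqr_ge0 //.
  by rewrite addr_ge0 ?sqr_ge0.
Qed.
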